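(* For all real $\alpha,\beta$ with $\beta\neq0$, every integer $n\ge0$ and every real $x$, \[ x^n=\sum_{k=0}^{n}\widetilde S_{\alpha,\beta}(n,k)\,P_k^{(\alpha,\beta)}(x),\qquad\text{where }\ \widetilde S_{\alpha,\beta}(n,k)=(-1)^{n-k}S_{-\alpha/\beta,\,1/\beta}(n,k). \]
   Context: For real $a$ and integer $n\ge 1$, $\langle a\rangle_n:=a(a+1)\cdots(a+n-1)$ and $\langle a\rangle_0:=1$. For real $\alpha,\beta$ with $\beta\neq0$, the polynomials $P_n^{(\alpha,\beta)}(x)$, $n\ge0$, are defined by $\sum_{n\ge0}P_n^{(\alpha,\beta)}(x)\frac{t^n}{n!}=(1-t)^{\alpha}\exp\big(x((1-t)^{\beta}-1)\big)$ (formal power series in $t$). For real $\alpha,\beta$ and integers $0\le k\le n$, $S_{\alpha,\beta}(n,k):=\frac{1}{k!}\sum_{j=0}^{k}(-1)^{k-j}\binom{k}{j}\langle-\alpha-\beta j\rangle_n$. *)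

(* Defs.v *)
(* the statement is purely algebraic (formal power series in t
   with real coefficients), so we state it over an arbitrary realFieldType R. *)
From HB Require Import structures.
From mathcomp Require Import all_boot all_order all_algebra.
Set Implicit Arguments. Unset Strict Implicit. Unset Printing Implicit Defensive.
Import Order.TTheory GRing.Theory Num.Theory.
Local Open Scope ring_scope.

Definition rising {R : ringType} (a : R) (n : nat) : R :=
  \prod_(i < n) (a + i%:R).

Definition Sab {R : fieldType} (al be : R) (n k : nat) : R :=
  (k`!%:R)^-1 * \sum_(j < k.+1)
     ((-1) ^+ (k - j) * 'C(k, j)%:R * rising (- al - be * j%:R) n).

Definition fps (R : Type) := nat -> R.

Definition fps_one {R : ringType} : fps R := fun n => (n == 0)%:R.

Definition fps_mul {R : ringType} (f g : fps R) : fps R :=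
  fun n => \sum_(i < n.+1) f i * g (n - i)%N.

Definition fps_pow {R : ringType} (f : fps R) (m : nat) : fps R :=
  iter m (fps_mul f) fps_one.

Definition gbinom {R : fieldType} (a : R) (n : nat) : R :=
  (\prod_(i < n) (a - i%:R)) / n`!%:R.

(* (1 - t)^a = sum_n binom(a,n) (-t)^n  (binomial series) *)
Definition one_minus_t_pow {R : fieldType} (a : R) : fps R :=
  fun n => (-1) ^+ n * gbinom a n.

(* exp(f) for a series f with zero constant term: sum_m f^m / m!;
   the coefficient of t^n only involves m <= n. *)
Definition fps_exp0 {R : fieldType} (f : fps R) : fps R :=
  fun n => \sum_(m < n.+1) fps_pow f m n / m`!%:R.

(* P_n^{(alpha,beta)}(x) = n! [t^n] (1-t)^alpha exp(x((1-t)^beta - 1)) *)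
Definition Pab {R : fieldType} (al be : R) (n : nat) (x : R) : R :=
  n`!%:R * fps_mul (one_minus_t_pow al)
     (fps_exp0 (fun k => x * (one_minus_t_pow be k - fps_one k))) n.

(* Main.v *)
Require Import Defs.
From HB Require Import structures.
From mathcomp Require Import all_boot all_order all_algebra.
From mathcomp Require Import ring lra zify.
Import Order.TTheory GRing.Theory Num.Theory.
Local Open Scope ring_scope.

Lemma pascal_sum (R : comRingType) (f : nat -> R) (n : nat) :
  \sum_(k < n.+2) f k * 'C(n.+1, k)%:R =
  \sum_(k < n.+1) (f k + f k.+1) * 'C(n, k)%:R.
Proof.
rewrite big_ord_recl /= bin0 mulr1.
under eq_bigr => i _ do rewrite /bump /= binS natrD mulrDr.
rewrite big_split /=.
under [in RHS]eq_bigr => i _ do rewrite mulrDl.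
rewrite big_split /= [in RHS]big_ord_recl /= bin0 mulr1 -addrA; congr (_ + _).
  rewrite big_ord_recr /= bin_small // mulr0n mulr0 addr0.
  by congr (_ + _); apply: eq_bigr => i _; rewrite /bump /= ?add1n.
Qed.

Definition bdiff {R : nzRingType} (a : nat -> R) (k : nat) : R :=
  \sum_(i < k.+1) (-1) ^+ i * 'C(k, i)%:R * a i.

Lemma bdiffS (R : comRingType) (a : nat -> R) k :
  bdiff a k.+1 = bdiff a k - bdiff (fun i => a i.+1) k.
Proof.
rewrite /bdiff.
under eq_bigr => i _ do rewrite [_ * _ * _]mulrAC.
rewrite (@pascal_sum _ (fun i => (-1) ^+ i * a i)) -sumrB; apply: eq_bigr => i _.
rewrite exprS; ring.
Qed.

Lemma binv (R : comRingType) (n : nat) (a : nat -> R) :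
  \sum_(k < n.+1) (-1) ^+ k * 'C(n, k)%:R * bdiff a k = a n.
Proof.
elim: n a => [|n IH] a.
  by rewrite big_ord1 /bdiff big_ord1 /= !mul1r.
under eq_bigr => i _ do rewrite [_ * _ * _]mulrAC.
rewrite (@pascal_sum _ (fun i => (-1) ^+ i * bdiff a i)) -[RHS](IH (fun i => a i.+1)).
apply: eq_bigr => i _; rewrite bdiffS exprS; ring.
Qed.

Lemma rising_negnat (R : numFieldType) (i k : nat) :
  (k`!%:R)^-1 * rising (- (i%:R) : R) k = (-1) ^+ k * 'C(i, k)%:R.
Proof.
have H : rising (- (i%:R) : R) k = (-1) ^+ k * (i ^_ k)%:R.
  elim: k => [|k IH]; first by rewrite /rising big_ord0 ffactn0 mulr1.
  rewrite /rising big_ord_recr /= -/(rising _ _) IH ffactnSr natrM.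
  case: (leqP k i) => hk.
    rewrite natrB // exprS; ring.
  by rewrite ffact_small // mulr0n !(mulr0, mul0r).
rewrite H -bin_ffact natrM.
have hk : (k`!%:R : R) != 0 by rewrite pnatr_eq0 -lt0n fact_gt0.
field; exact: hk.
Qed.

Lemma size_prod2 (R : comRingType) (F : nat -> {poly R}) (k : nat) :
  (forall l, (size (F l) <= 2)%N) -> (size (\prod_(l < k) F l)%R <= k.+1)%N.
Proof.
move=> hF; elim: k => [|k IH]; first by rewrite big_ord0 size_poly1.
rewrite big_ord_recr /=; apply: leq_trans (size_polyMleq _ _) _.
have := leq_add IH (hF k); rewrite addnS addn1 /=.
by case: (size _ + size _)%N.
Qed.

Lemma size_sum_ord (R : comRingType) (m : nat) (F : 'I_m -> {poly R}) :
  (forall k, (size (F k) <= m)%N) -> (size (\sum_(k < m) F k)%R <= m)%N.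
Proof.
move=> hF; apply: leq_trans (size_sum _ _ _) _.
by apply/bigmax_leqP => k _; exact: hF.
Qed.

Lemma newton (R : numFieldType) (N : nat) (p : {poly R}) :
  (size p <= N.+1)%N -> forall y,
  p.[y] = \sum_(k < N.+1) (k`!%:R)^-1 * bdiff (fun i => p.[- (i%:R)]) k
            * rising y k.
Proof.
move=> hp y.
set a := fun i : nat => p.[- (i%:R)].
pose r : {poly R} := \sum_(k < N.+1)
   ((k`!%:R)^-1 * bdiff a k) *: \prod_(l < k) ('X + (l%:R)%:P).
have hr : forall z, r.[z] = \sum_(k < N.+1) (k`!%:R)^-1 * bdiff a k * rising z k.
  move=> z; rewrite /r horner_sum; apply: eq_bigr => k _.
  rewrite hornerZ horner_prod /rising; congr (_ * _); apply: eq_bigr => l _.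
  by rewrite hornerD hornerX hornerC.
rewrite -hr; apply/eqP; rewrite -subr_eq0 -hornerN -hornerD.
suff -> : p - r = 0 by rewrite horner0.
apply/eqP; apply: contraT => hne.
have hs : (size (p - r)%R <= N.+1)%N.
  apply: leq_trans (size_polyD _ _) _; rewrite geq_max hp size_polyN /=.
  apply: size_sum_ord => k.
  apply: leq_trans (size_scale_leq _ _) _.
  apply: leq_trans (@size_prod2 _ (fun l : nat => 'X + (l%:R)%:P) k _) _.
    by move=> l; rewrite size_XaddC.
  exact: ltn_ord k.
have := max_poly_roots hne (rs := [seq - (i%:R) | i <- iota 0 N.+1]).
rewrite size_map size_iota => /(_ _ _) H.
have := leq_trans (H _ _) hs; rewrite ltnn; apply.
- apply/allP => z /mapP [i]; rewrite mem_iota add0n => /andP [_ hi] ->.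
  rewrite /root hornerD hornerN hr subr_eq0; apply/eqP.
  have -> : p.[- (i%:R)] = a i by [].
  rewrite -(@binv _ i a) (big_ord_widen _ (fun k => (-1) ^+ k * 'C(i, k)%:R * bdiff a k) hi) big_mkcond /=.
  apply: eq_bigr => k _; rewrite [RHS]mulrAC rising_negnat.
  case: ltnP => hk; first by ring.
  rewrite bin_small // mulr0n; ring.
- rewrite map_inj_uniq ?iota_uniq // => u v /eqP.
  by rewrite eqr_opp eqr_nat => /eqP.
Qed.

Lemma sgn_sub (R : ringType) (m n : nat) : (m <= n)%N ->
  (-1) ^+ (n - m) = (-1) ^+ n * (-1) ^+ m :> R.
Proof.
move=> h; rewrite -{2}(subnK h) exprD -mulrA -exprD addnn -mul2n exprM.
by rewrite sqrrN expr1n expr1n mulr1.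
Qed.

Lemma stepC (R : realFieldType) (al be : R) (hbe : be != 0) (n : nat) (y : R) :
  \sum_(k < n.+1) ((-1) ^+ (n - k) * Sab (- al / be) (1 / be) n k)
      * rising (- al - be * y) k = \prod_(l < n) (y - l%:R).
Proof.
pose H : {poly R} := \prod_(l < n) ((- be^-1) *: 'X + (- (al / be + l%:R))%:P).
have hH : forall z, H.[z] = \prod_(l < n) (- be^-1 * z - (al / be + l%:R)).
  move=> z; rewrite /H horner_prod; apply: eq_bigr => l _.
  by rewrite hornerD hornerZ hornerX hornerC.
have hs : (size H <= n.+1)%N.
  apply: (@size_prod2 _ (fun l : nat => (- be^-1) *: 'X + (- (al / be + l%:R))%:P)).
  move=> l; apply: leq_trans (size_polyD _ _) _; rewrite geq_max.
  rewrite (leq_trans (size_scale_leq _ _)) ?size_polyX //.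
  by rewrite (leq_trans (size_polyC_leq1 _)).
have := @newton _ _ _ hs (- al - be * y).
rewrite hH.
have -> : \prod_(l < n) (- be^-1 * (- al - be * y) - (al / be + l%:R))
   = \prod_(l < n) (y - l%:R).
  by apply: eq_bigr => l _; field.
move=> ->; apply: eq_bigr => k _; congr (_ * _).
rewrite /Sab /bdiff mulrCA; congr (_ * _).
rewrite mulr_sumr; apply: eq_bigr => j _.
rewrite hH.
have hjk : (j <= k)%N by rewrite -ltnS.
have hkn : (k <= n)%N by rewrite -ltnS.
have -> : \prod_(l < n) (- be^-1 * (- (j%:R)) - (al / be + l%:R))
   = (-1) ^+ n * rising (- (- al / be) - 1 / be * j%:R) n.
  rewrite /rising -[in X in (-1) ^+ X * _](card_ord n) -prodrN.
  by apply: eq_bigr => l _; field.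
have -> : (-1) ^+ (n - k) * ((-1) ^+ (k - j) * 'C(k, j)%:R * rising (- (- al / be) - 1 / be * j%:R) n)
  = (-1) ^+ (n - k + (k - j)) * 'C(k, j)%:R * rising (- (- al / be) - 1 / be * j%:R) n.
  by rewrite exprD; ring.
have -> : (n - k + (k - j) = n - j)%N by rewrite addnBA // subnK.
rewrite sgn_sub; last exact: leq_trans hjk hkn.
ring.
Qed.

Definition ff {R : nzRingType} (a : R) (n : nat) : R := \prod_(i < n) (a - i%:R).

Lemma ffS (R : comRingType) (a : R) n : ff a n.+1 = ff a n * (a - n%:R).
Proof. by rewrite /ff big_ord_recr. Qed.

Lemma vander_ff (R : comRingType) (a b : R) (n : nat) :
  ff (a + b) n = \sum_(i < n.+1) ff a i * ff b (n - i)%N * 'C(n, i)%:R.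
Proof.
elim: n => [|n IH]; first by rewrite big_ord1 /ff !big_ord0 mulr1 mul1r.
rewrite (@pascal_sum _ (fun i => ff a i * ff b (n.+1 - i))) ffS IH mulr_suml.
apply: eq_bigr => i _.
have hi : (i <= n)%N by rewrite -ltnS.
rewrite subSn // ffS subSS ffS natrB //; ring.
Qed.

Lemma fact_neq0 (R : numFieldType) n : (n`!%:R : R) != 0.
Proof. by rewrite pnatr_eq0 -lt0n fact_gt0. Qed.

Lemma omtE (R : numFieldType) (a : R) n :
  one_minus_t_pow a n = (-1) ^+ n * ff a n / n`!%:R.
Proof. by rewrite /one_minus_t_pow /gbinom /ff mulrA. Qed.

Lemma omt_mul (R : numFieldType) (a b : R) n :
  \sum_(i < n.+1) one_minus_t_pow a i * one_minus_t_pow b (n - i)%N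
  = one_minus_t_pow (a + b) n.
Proof.
rewrite omtE vander_ff !mulr_sumr mulr_suml; apply: eq_bigr => i _.
have hi : (i <= n)%N by rewrite -ltnS.
rewrite !omtE.
have hC : ('C(n, i)%:R : R) = n`!%:R / (i`!%:R * (n - i)`!%:R).
  rewrite -(bin_fact hi) !natrM; field.
  by rewrite !fact_neq0.
rewrite hC.
have -> : (-1) ^+ n = (-1) ^+ i * (-1) ^+ (n - i) :> R by rewrite -exprD subnKC.
field; by rewrite !fact_neq0.
Qed.

Lemma omt_rising (R : numFieldType) (c : R) k :
  k`!%:R * one_minus_t_pow c k = rising (- c) k.
Proof.
rewrite omtE /rising /ff -[in X in (-1) ^+ X](card_ord k) -prodrN.
rewrite mulrC -mulrA mulVf ?fact_neq0 // mulr1.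
by apply: eq_bigr => i _; rewrite opprB addrC.
Qed.

Lemma omt0 (R : numFieldType) (c : R) : one_minus_t_pow c 0 = 1.
Proof. by rewrite omtE /ff big_ord0 !mul1r invr1. Qed.

Definition tr {R : nzRingType} (N : nat) (f : nat -> R) : {poly R} :=
  \poly_(i < N.+1) f i.

Lemma coef_tr (R : nzRingType) N (f : nat -> R) l : (l <= N)%N -> (tr N f)`_l = f l.
Proof. by move=> hl; rewrite /tr coef_poly ltnS hl. Qed.

Lemma mul_omt_coef (R : numFieldType) (a b : R) (p q : {poly R}) l :
  (forall i, (i <= l)%N -> p`_i = one_minus_t_pow a i) ->
  (forall i, (i <= l)%N -> q`_i = one_minus_t_pow b i) ->
  (p * q)`_l = one_minus_t_pow (a + b) l.
Proof.
move=> hp hq; rewrite coefM -omt_mul; apply: eq_bigr => i _.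
have hi : (i <= l)%N by rewrite -ltnS.
by rewrite hp // hq // leq_subr.
Qed.

Lemma pow_omt_coef (R : numFieldType) (a b : R) N (j l : nat) : (l <= N)%N ->
  (tr N (one_minus_t_pow a) * tr N (one_minus_t_pow b) ^+ j)`_l
  = one_minus_t_pow (a + b * j%:R) l.
Proof.
elim: j l => [|j IH] l hl; first by rewrite expr0 mulr1 mulr0 addr0 coef_tr.
rewrite exprSr mulrA (@mul_omt_coef _ (a + b * j%:R) b).
- by congr one_minus_t_pow; rewrite -addn1 natrD; ring.
- by move=> i hi; apply: IH; apply: leq_trans hl.
- by move=> i hi; apply: coef_tr; apply: leq_trans hl.
Qed.

Lemma mulfps (R : nzRingType) N (f g : fps R) l : (l <= N)%N ->
  fps_mul f g l = (tr N f * tr N g)`_l.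
Proof.
move=> hl; rewrite coefM /fps_mul; apply: eq_bigr => i _.
have hi : (i <= l)%N by rewrite -ltnS.
by rewrite !coef_tr // ?(leq_trans (leq_subr _ _) hl) // (leq_trans hi hl).
Qed.

Lemma powfps (R : nzRingType) N (f : fps R) m l : (l <= N)%N ->
  fps_pow f m l = (tr N f ^+ m)`_l.
Proof.
elim: m l => [|m IH] l hl; first by rewrite expr0 coef1.
rewrite exprS coefM /fps_pow iterS -/(fps_pow f m) /fps_mul.
apply: eq_bigr => i _.
have hi : (i <= l)%N by rewrite -ltnS.
by rewrite coef_tr ?IH // ?(leq_trans (leq_subr _ _) hl) // (leq_trans hi hl).
Qed.

Lemma pow_small (R : nzRingType) (u : fps R) m l : u 0%N = 0 -> (l < m)%N ->
  fps_pow u m l = 0.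
Proof.
move=> u0; elim: m l => [|m IH] l hl //.
rewrite /fps_pow iterS -/(fps_pow u m) /fps_mul big1 // => i _.
case: (posnP i) => [->|hi]; first by rewrite u0 mul0r.
rewrite IH ?mulr0 //; have := ltn_ord i; lia.
Qed.

Lemma coef_signM (R : nzRingType) (p : {poly R}) i k :
  ((-1) ^+ i * p)`_k = (-1) ^+ i * p`_k.
Proof.
elim: i => [|i IH]; first by rewrite !mul1r.
by rewrite !exprS -!mulrA !mulN1r coefN IH.
Qed.

Lemma PabE (R : realFieldType) (al be x : R) N k : (k <= N)%N ->
  Pab al be k x = \sum_(m < N.+1) x ^+ m / m`!%:R *
     \sum_(i < m.+1) (-1) ^+ i * 'C(m, i)%:R * rising (- al - be * (m - i)%N%:R) k.
Proof.
move=> hk.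
set u := (fun k => x * (one_minus_t_pow be k - fps_one k)).
have u0 : u 0%N = 0 by rewrite /u omt0 /fps_one /= subrr mulr0.
set A := tr N (one_minus_t_pow be).
set Ex := \sum_(m < N.+1) (x ^+ m / m`!%:R) *: (A - 1) ^+ m.
have tru : tr N u = x *: (A - 1).
  apply/polyP => i; rewrite coefZ coefB coef1 /A /tr !coef_poly /u /fps_one.
  case: ltnP => // hi; rewrite -[i]prednK ?(leq_trans _ hi) //=.
  by rewrite mulr0n subr0 mulr0.
have hE : forall l, (l <= N)%N -> fps_exp0 u l = Ex`_l.
  move=> l hl; rewrite /fps_exp0 /Ex coef_sum.
  rewrite (big_ord_widen N.+1 (fun m => fps_pow u m l / m`!%:R)) // big_mkcond /=.
  apply: eq_bigr => m _; rewrite coefZ (@powfps _ N) // tru exprZn coefZ.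
  case: ltnP => hm; first by rewrite mulrAC.
  by rewrite -mulrA mulrCA -coefZ -exprZn -tru -(@powfps _ N) // pow_small // mulr0.
rewrite /Pab /fps_mul.
have -> : \sum_(i < k.+1) one_minus_t_pow al i * fps_exp0 u (k - i)%N
    = (tr N (one_minus_t_pow al) * Ex)`_k.
  rewrite coefM; apply: eq_bigr => i _.
  have hi : (i <= k)%N by rewrite -ltnS.
  rewrite coef_tr ?(leq_trans hi hk) // hE //.
  exact: leq_trans (leq_subr _ _) hk.
rewrite /Ex mulr_sumr coef_sum mulr_sumr; apply: eq_bigr => m _.
rewrite -scalerAr coefZ exprBn mulr_sumr coef_sum mulrCA; congr (_ * _).
rewrite mulr_sumr; apply: eq_bigr => i _.
have -> : forall (P Q : {poly R}) c, (P * (Q * 1 ^+ i *+ c))`_k = (P * Q)`_k *+ c.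
  by move=> P Q c; rewrite expr1n mulr1 mulrnAr coefMn.
rewrite [_ * (_ * A ^+ _)]mulrCA coef_signM pow_omt_coef //.
have -> : - al - be * (m - i)%:R = - (al + be * (m - i)%:R) by ring.
rewrite -omt_rising.
set o := one_minus_t_pow _ _.
rewrite -[_ *+ 'C(m, i)]mulr_natr.
ring.
Qed.

Lemma prod_small (R : numFieldType) (j n : nat) : (j < n)%N ->
  \prod_(l < n) (j%:R - l%:R : R) = 0.
Proof. by move=> hj; rewrite (bigD1 (Ordinal hj)) //= subrr mul0r. Qed.

Lemma prod_fact (R : numFieldType) (n : nat) :
  \prod_(l < n) (n%:R - l%:R : R) = n`!%:R.
Proof.
rewrite -ffactnn ffact_prod natr_prod; apply: eq_bigr => l _.
by rewrite natrB // ltnW.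
Qed.

Theorem proposition2 (R : realFieldType) (al be : R) (hbe : be != 0)
    (n : nat) (x : R) :
  x ^+ n = \sum_(k < n.+1)
     ((-1) ^+ (n - k) * Sab (- al / be) (1 / be) n k) * Pab al be k x.
Proof.
set c := fun k : nat => (-1) ^+ (n - k) * Sab (- al / be) (1 / be) n k.
have -> : \sum_(k < n.+1) ((-1) ^+ (n - k) * Sab (- al / be) (1 / be) n k) * Pab al be k x
   = \sum_(k < n.+1) \sum_(m < n.+1) c k * (x ^+ m / m`!%:R *
     \sum_(i < m.+1) (-1) ^+ i * 'C(m, i)%:R * rising (- al - be * (m - i)%N%:R) k).
  apply: eq_bigr => k _; rewrite (@PabE R al be x n k) ?mulr_sumr //.
  by rewrite -ltnS.
rewrite exchange_big /=.
have hm : forall m : 'I_n.+1, \sum_(k < n.+1) c k * (x ^+ m / m`!%:R *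
     \sum_(i < m.+1) (-1) ^+ i * 'C(m, i)%:R * rising (- al - be * (m - i)%N%:R) k)
   = x ^+ m / m`!%:R * \sum_(i < m.+1) (-1) ^+ i * 'C(m, i)%:R *
        \prod_(l < n) ((m - i)%N%:R - l%:R).
  move=> m; set a := x ^+ m / m`!%:R.
  rewrite mulr_sumr; under eq_bigr do rewrite mulrCA; rewrite -mulr_sumr.
  rewrite -big_distrr /=; congr (_ * _).
  under eq_bigr do rewrite mulr_sumr.
  rewrite exchange_big /=.
  apply: eq_bigr => i _; rewrite -(@stepC R al be hbe n) mulr_sumr.
  by apply: eq_bigr => k _; rewrite mulrCA.
under eq_bigr do rewrite hm.
rewrite big_ord_recr /= big1 ?add0r.
  rewrite big_ord_recl /= subn0 prod_fact big1 ?addr0.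
    by rewrite expr0 bin0 !mul1r divfK // fact_neq0.
  move=> i _; rewrite prod_small ?mulr0 //.
  rewrite /bump /=; have := ltn_ord i; lia.
move=> m _; rewrite big1 ?mulr0 // => i _.
rewrite prod_small ?mulr0 //; have := ltn_ord m; lia.
Qed.
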